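(* Let $K$ be a field of characteristic $0$, $\eta\in K\setminus\{0\}$ not a root of unity, $A=A_\eta=A(1+\eta,-\eta,1)$, $\epsilon=(\eta-1)^{-1}$ and $w=-ud+du+\epsilon$. Let $N=A/A(d-1)$ and for $a\in A$ write $\bar a$ for its image in $N$. Then every nonzero submodule $U$ of $N$ contains $\overline{w^m}$ for some integer $m\ge0$.
   Context: The down-up algebra $A(\alpha,\beta,\gamma)$ is the $K$-algebra generated by $d,u$ with relations $d^2u=\alpha dud+\beta ud^2+\gamma d$ and $du^2=\alpha udu+\beta u^2d+\gamma u$. In $A_\eta$, $w$ is normal with $dw=\eta wd$, $uw=\eta^{-1}wu$. *)

(* Defs.v *)
From HB Require Import structures.
From mathcomp Require Import all_boot all_order all_algebra.
Set Implicit Arguments. Unset Strict Implicit. Unset Printing Implicit Defensive.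
Import GRing.Theory.
Local Open Scope ring_scope.

(* The free associative K-algebra K<d,u> on two noncommuting letters,
   realised as coefficient functions on words (letter false = d,
   letter true = u); genuine elements are those of finite support. *)
Definition ncp (K : fieldType) := seq bool -> K.

Section FreeAlg.
Variable K : fieldType.

Definition nc_fin (f : ncp K) : Prop :=
  exists n : nat, forall s : seq bool, (n <= size s)%N -> f s = 0.

Definition nc_zero : ncp K := fun _ => 0.
Definition nc_add (f g : ncp K) : ncp K := fun s => f s + g s.
Definition nc_opp (f : ncp K) : ncp K := fun s => - f s.
Definition nc_sub (f g : ncp K) : ncp K := nc_add f (nc_opp g).
Definition nc_scale (c : K) (f : ncp K) : ncp K := fun s => c * f s.
Definition nc_mul (f g : ncp K) : ncp K :=
  fun s => \sum_(i < (size s).+1) f (take i s) * g (drop i s).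
Definition nc_mono (w : seq bool) : ncp K := fun s => if s == w then 1 else 0.
Definition nc_const (c : K) : ncp K := nc_scale c (nc_mono [::]).
Definition nc_one : ncp K := nc_mono [::].
Definition nc_exp (f : ncp K) (m : nat) : ncp K := iter m (nc_mul f) nc_one.

Definition ncd : ncp K := nc_mono [:: false].
Definition ncu : ncp K := nc_mono [:: true].

Definition is_left_ideal (J : ncp K -> Prop) : Prop :=
  [/\ (forall x, J x -> nc_fin x),
      J nc_zero,
      (forall x y, J x -> J y -> J (nc_add x y)) &
      (forall a x, nc_fin a -> J x -> J (nc_mul a x))].

Definition downup_rel1 (al be ga : K) : ncp K :=
  nc_sub (nc_mono [:: false; false; true])
    (nc_add (nc_scale al (nc_mono [:: false; true; false]))
      (nc_add (nc_scale be (nc_mono [:: true; false; false]))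
              (nc_scale ga ncd))).
Definition downup_rel2 (al be ga : K) : ncp K :=
  nc_sub (nc_mono [:: false; true; true])
    (nc_add (nc_scale al (nc_mono [:: true; false; true]))
      (nc_add (nc_scale be (nc_mono [:: true; true; false]))
              (nc_scale ga ncu))).

(* J contains the kernel of K<d,u> -> A(al,be,ga) -> N = A/A(d-1), i.e. the
   two-sided ideal generated by the relations (= left ideal generated by
   rel*b) plus the left ideal generated by d - 1. *)
Definition contains_N_kernel (al be ga : K) (J : ncp K -> Prop) : Prop :=
  [/\ (forall b, nc_fin b -> J (nc_mul (downup_rel1 al be ga) b)),
      (forall b, nc_fin b -> J (nc_mul (downup_rel2 al be ga) b)) &
      J (nc_sub ncd nc_one)].

Definition N_kernel (al be ga : K) (x : ncp K) : Prop :=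
  forall J, is_left_ideal J -> contains_N_kernel al be ga J -> J x.

End FreeAlg.

(* Main.v *)
From HB Require Import structures.
Require Import Defs.
From mathcomp Require Import all_boot all_order all_algebra.
From mathcomp Require Import boolp zify ring.
Set Implicit Arguments. Unset Strict Implicit. Unset Printing Implicit Defensive.
Import GRing.Theory.
Local Open Scope ring_scope.

Section Ring.
Variable K : fieldType.

HB.instance Definition _ := gen_eqMixin (ncp K).
HB.instance Definition _ := gen_choiceMixin (ncp K).

Lemma nc_addA : associative (@nc_add K).
Proof. by move=> f g h; apply: funext => s; rewrite /nc_add addrA. Qed.
Lemma nc_addC : commutative (@nc_add K).
Proof. by move=> f g; apply: funext => s; rewrite /nc_add addrC. Qed.
Lemma nc_add0 : left_id (@nc_zero K) (@nc_add K).
Proof. by move=> f; apply: funext => s; rewrite /nc_add /nc_zero add0r. Qed.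
Lemma nc_addN : left_inverse (@nc_zero K) (@nc_opp K) (@nc_add K).
Proof. by move=> f; apply: funext => s; rewrite /nc_add /nc_opp /nc_zero addNr. Qed.

HB.instance Definition _ := GRing.isZmodule.Build (ncp K) nc_addA nc_addC nc_add0 nc_addN.

Definition tl (b : bool) (f : ncp K) : ncp K := fun s => f (b :: s).

Lemma mul_nil (f g : ncp K) : nc_mul f g [::] = f [::] * g [::].
Proof. by rewrite /nc_mul big_ord_recl big_ord0 addr0. Qed.

Lemma mul_cons (f g : ncp K) b s :
  nc_mul f g (b :: s) = f [::] * g (b :: s) + nc_mul (tl b f) g s.
Proof. by rewrite /nc_mul big_ord_recl. Qed.

Lemma mul_addl (f g h : ncp K) : nc_mul (nc_add f g) h = nc_add (nc_mul f h) (nc_mul g h).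
Proof. apply: funext => s; rewrite /nc_mul /nc_add -big_split; apply: eq_bigr => i _; by rewrite mulrDl. Qed.
Lemma mul_addr (f g h : ncp K) : nc_mul f (nc_add g h) = nc_add (nc_mul f g) (nc_mul f h).
Proof. apply: funext => s; rewrite /nc_mul /nc_add -big_split; apply: eq_bigr => i _; by rewrite mulrDr. Qed.
Lemma mul_scalel c (f h : ncp K) : nc_mul (nc_scale c f) h = nc_scale c (nc_mul f h).
Proof. apply: funext => s; rewrite /nc_mul /nc_scale mulr_sumr; apply: eq_bigr => i _; by rewrite mulrA. Qed.
Lemma tl_mul (f g : ncp K) b :
  tl b (nc_mul f g) = nc_add (nc_scale (f [::]) (tl b g)) (nc_mul (tl b f) g).
Proof. apply: funext => s; rewrite /nc_add /nc_scale /tl /=; by rewrite mul_cons. Qed.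

Lemma nc_mulA : associative (@nc_mul K).
Proof.
move=> f g h; apply: funext => s; elim: s f g h => [|b s IH] f g h.
  by rewrite !mul_nil mulrA.
rewrite !mul_cons mul_nil tl_mul mul_addl mul_scalel /nc_add /nc_scale IH.
by rewrite mulrDr !mulrA addrA.
Qed.

Lemma tl_one b : tl b (@nc_one K) = nc_zero K.
Proof. by apply: funext => s; rewrite /tl /nc_one /nc_mono. Qed.

Lemma mul0 (f : ncp K) : nc_mul (nc_zero K) f = nc_zero K.
Proof. apply: funext => s; rewrite /nc_mul big1 // => i _; by rewrite /nc_zero mul0r. Qed.

Lemma nc_mul1 : left_id (@nc_one K) (@nc_mul K).
Proof.
move=> f; apply: funext => [[|b s]]; first by rewrite mul_nil /nc_one /nc_mono eqxx mul1r.
by rewrite mul_cons tl_one mul0 /nc_one /nc_mono eqxx mul1r /nc_zero addr0.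
Qed.

Lemma nc_mul1r : right_id (@nc_one K) (@nc_mul K).
Proof.
move=> f; apply: funext => s; elim: s f => [|b s IH] f.
  by rewrite mul_nil /nc_one /nc_mono eqxx mulr1.
by rewrite mul_cons IH /nc_one /nc_mono /= mulr0 add0r.
Qed.

Lemma nc_one_neq0 : (@nc_one K) != nc_zero K.
Proof.
apply/eqP => /(congr1 (fun f => f [::])); rewrite /nc_one /nc_mono /nc_zero eqxx.
by move/eqP; rewrite oner_eq0.
Qed.

HB.instance Definition _ := GRing.Zmodule_isNzRing.Build (ncp K) nc_mulA nc_mul1 nc_mul1r
  mul_addl mul_addr nc_one_neq0.


Definition C (a : K) : ncp K := nc_const a.

Lemma addE (x y : ncp K) s : (x + y) s = x s + y s. Proof. by []. Qed.
Lemma oppE (x : ncp K) s : (- x) s = - x s. Proof. by []. Qed.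
Lemma subE (x y : ncp K) s : (x - y) s = x s - y s. Proof. by []. Qed.
Lemma zeroE s : (0 : ncp K) s = 0. Proof. by []. Qed.
Lemma mulE (x y : ncp K) : x * y = nc_mul x y. Proof. by []. Qed.
Lemma oneE : (1 : ncp K) = nc_one K. Proof. by []. Qed.

Lemma mul_scaler c (f h : ncp K) : nc_mul f (nc_scale c h) = nc_scale c (nc_mul f h).
Proof. apply: funext => s; rewrite /nc_mul /nc_scale mulr_sumr; apply: eq_bigr => i _; by rewrite mulrCA. Qed.

Lemma scaleE c (f : ncp K) : nc_scale c f = C c * f.
Proof. by rewrite /C /nc_const mulE mul_scalel (_ : nc_mono K [::] = nc_one K) // nc_mul1. Qed.

Lemma Ccomm c (f : ncp K) : f * C c = C c * f.
Proof. by rewrite /C /nc_const !mulE mul_scaler mul_scalel (_ : nc_mono K [::] = nc_one K) // nc_mul1 nc_mul1r. Qed.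

Lemma CE a (f : ncp K) s : (C a * f) s = a * f s.
Proof. by rewrite -scaleE. Qed.

Lemma C_add a b : C (a + b) = C a + C b.
Proof. by apply: funext => s; rewrite addE /C /nc_const /nc_scale mulrDl. Qed.
Lemma C_mul a b : C (a * b) = C a * C b.
Proof. by rewrite -scaleE; apply: funext => s; rewrite /C /nc_const /nc_scale mulrA. Qed.
Lemma C1 : C 1 = 1.
Proof. by apply: funext => s; rewrite /C /nc_const /nc_scale mul1r. Qed.
Lemma C0 : C 0 = 0.
Proof. by apply: funext => s; rewrite /C /nc_const /nc_scale mul0r. Qed.
Lemma C_opp a : C (- a) = - C a.
Proof. by apply: funext => s; rewrite oppE /C /nc_const /nc_scale mulNr. Qed.
Lemma C_sub a b : C (a - b) = C a - C b.
Proof. by rewrite C_add C_opp. Qed.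
Lemma C_nat n : C n%:R = n%:R.
Proof. elim: n => [|n IH]; first by rewrite C0. by rewrite !mulrS C_add C1 IH. Qed.

Lemma monoE w s : nc_mono K w s = if s == w then 1 else 0.
Proof. by []. Qed.

Lemma tl_mono1 b b' : tl b' (nc_mono K [:: b]) = if b' == b then 1 else 0.
Proof.
apply: funext => t; rewrite /tl /nc_mono; case: (b' =P b) => [->|/eqP nb].
  by rewrite oneE /nc_one /nc_mono eqseq_cons eqxx.
by rewrite eqseq_cons (negbTE nb).
Qed.

Lemma mono_cons b s : nc_mono K (b :: s) = nc_mono K [:: b] * nc_mono K s.
Proof.
apply: funext => [[|b' t]]; rewrite mulE.
  by rewrite mul_nil /nc_mono /= mul0r.
rewrite mul_cons tl_mono1 /= mul0r add0r monoE eqseq_cons.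
case: (b' == b) => /=; first by rewrite -mulE mul1r.
by rewrite -mulE mul0r.
Qed.


Lemma fin0 : nc_fin (0 : ncp K). Proof. by exists 0%N. Qed.
Lemma fin_add (x y : ncp K) : nc_fin x -> nc_fin y -> nc_fin (x + y).
Proof.
move=> [n Hn] [m Hm]; exists (maxn n m) => s Hs; rewrite addE Hn ?Hm ?addr0 //.
  exact: leq_trans (leq_maxr _ _) Hs. exact: leq_trans (leq_maxl _ _) Hs.
Qed.
Lemma fin_opp (x : ncp K) : nc_fin x -> nc_fin (- x).
Proof. by move=> [n Hn]; exists n => s Hs; rewrite oppE Hn ?oppr0. Qed.
Lemma fin_sub (x y : ncp K) : nc_fin x -> nc_fin y -> nc_fin (x - y).
Proof. by move=> *; apply: fin_add => //; apply: fin_opp. Qed.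
Lemma fin_mul (x y : ncp K) : nc_fin x -> nc_fin y -> nc_fin (x * y).
Proof.
move=> [n Hn] [m Hm]; exists (n + m)%N => s Hs; rewrite mulE /nc_mul big1 // => [[i Hi]] _ /=.
case: (leqP n i) => Hni; first by rewrite Hn ?mul0r // size_take; case: ltnP => //; lia.
rewrite Hm ?mulr0 // size_drop; lia.
Qed.
Lemma fin_mono w : nc_fin (nc_mono K w).
Proof. exists (size w).+1 => s Hs; rewrite monoE; case: eqP => // E; move: Hs; rewrite E; lia. Qed.
Lemma fin_one : nc_fin (1 : ncp K). Proof. exact: fin_mono. Qed.
Lemma fin_C a : nc_fin (C a).
Proof. by rewrite -[C a]mulr1 -scaleE; case: fin_one => n Hn; exists n => s Hs; rewrite /nc_scale Hn ?mulr0. Qed.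
Lemma fin_exp (x : ncp K) n : nc_fin x -> nc_fin (x ^+ n).
Proof. move=> H; elim: n => [|n IH]; [exact: fin_one| rewrite exprS; exact: fin_mul]. Qed.
Lemma fin_sum (I : Type) (r : seq I) (P : pred I) (F : I -> ncp K) :
  (forall i, nc_fin (F i)) -> nc_fin (\sum_(i <- r | P i) F i).
Proof. move=> H; apply: (big_rec (fun x : ncp K => nc_fin x)); [exact: fin0 | move=> i x _ Hx; exact: fin_add]. Qed.

End Ring.
Section Alg.
Variable K : fieldType.
Variable eta : K.
Hypothesis eta1 : eta - 1 != 0.

Notation dd := (nc_mono K [:: false]).
Notation uu := (nc_mono K [:: true]).
Definition e := (eta - 1)^-1.
Definition w := dd * uu - uu * dd + C e.

Lemma mono_cat a b : nc_mono K a * nc_mono K b = nc_mono K (a ++ b).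
Proof. elim: a => [|x a IH] /=; first by rewrite mul1r. by rewrite mono_cons -mulrA IH -mono_cons. Qed.

Lemma He : 1 + e = eta * e.
Proof. rewrite /e; by field. Qed.

Ltac splitw s :=
  match goal with |- context [s == ?w] =>
    case: (eqVneq s w) => [->|?] /=; try splitw s end.

Lemma F1 : dd * w - C eta * (w * dd) = downup_rel1 (1 + eta) (- eta) 1.
Proof.
rewrite /w /downup_rel1 mulrDr mulrBr mulrDl mulrBl !mulrA !mono_cat /= Ccomm.
apply: funext => s; rewrite /nc_sub /nc_add /nc_opp /nc_scale /ncd.
rewrite !(addE, subE, CE, oppE, monoE) /=.
splitw s; rewrite /e; field => //.
Qed.

Lemma F2 : w * uu - C eta * (uu * w) = downup_rel2 (1 + eta) (- eta) 1.
Proof.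
rewrite /w /downup_rel2 mulrDr mulrBr mulrDl mulrBl !mulrA !mono_cat /= Ccomm.
apply: funext => s; rewrite /nc_sub /nc_add /nc_opp /nc_scale /ncu.
rewrite !(addE, subE, CE, oppE, monoE) /=.
splitw s; rewrite /e; field => //.
Qed.

Lemma fin_dd : nc_fin dd. Proof. exact: fin_mono. Qed.
Lemma fin_uu : nc_fin uu. Proof. exact: fin_mono. Qed.
Lemma fin_w : nc_fin w.
Proof. apply: fin_add; [apply: fin_sub; apply: fin_mul|]; auto using fin_mono, fin_C. Qed.

Hint Resolve fin_dd fin_uu fin_w fin_C fin_one fin0 : fin.
Ltac fin := repeat first [ solve [auto with fin] | apply: fin_add | apply: fin_sub | apply: fin_opp
   | apply: fin_mul | apply: fin_exp | apply: fin_sum => ? ].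

Variable J : ncp K -> Prop.
Hypothesis HJ : is_left_ideal J.
Hypothesis HK : contains_N_kernel (1 + eta) (- eta) 1 J.

Lemma J_fin x : J x -> nc_fin x. Proof. by case: HJ => H _ _ _; apply: H. Qed.
Lemma J0 : J 0. Proof. by case: HJ. Qed.
Lemma J_add x y : J x -> J y -> J (x + y). Proof. by case: HJ => _ _ H _; apply: H. Qed.
Lemma J_mul a x : nc_fin a -> J x -> J (a * x). Proof. by case: HJ => _ _ _ H; apply: H. Qed.
Lemma J_opp x : J x -> J (- x).
Proof. move=> Hx; rewrite -mulN1r -C1 -C_opp; apply: J_mul => //; exact: fin_C. Qed.
Lemma J_sub x y : J x -> J y -> J (x - y).
Proof. by move=> ? ?; apply: J_add => //; apply: J_opp. Qed.
Lemma J_eq x y : x = y -> J x -> J y. Proof. by move=> ->. Qed.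
Lemma Jd : J (dd - 1). Proof. by case: HK. Qed.

Definition T x := forall b, nc_fin b -> J (x * b).
Lemma T_J x : T x -> J x. Proof. by move=> H; rewrite -[x]mulr1; apply: H; fin. Qed.
Lemma T0 : T 0. Proof. by move=> b _; rewrite mul0r; exact: J0. Qed.
Lemma T_add x y : T x -> T y -> T (x + y).
Proof. by move=> Hx Hy b Hb; rewrite mulrDl; apply: J_add; auto. Qed.
Lemma T_opp x : T x -> T (- x).
Proof. by move=> Hx b Hb; rewrite mulNr; apply: J_opp; auto. Qed.
Lemma T_sub x y : T x -> T y -> T (x - y).
Proof. by move=> ? ?; apply: T_add => //; apply: T_opp. Qed.
Lemma T_mull a x : nc_fin a -> T x -> T (a * x).
Proof. by move=> Ha Hx b Hb; rewrite -mulrA; apply: J_mul; auto. Qed.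
Lemma T_mulr x c : nc_fin c -> T x -> T (x * c).
Proof. by move=> Hc Hx b Hb; rewrite -mulrA; apply: Hx; fin. Qed.
Lemma T_eq x y : x = y -> T x -> T y. Proof. by move=> ->. Qed.
Lemma T_rel1 : T (dd * w - C eta * (w * dd)).
Proof. rewrite F1; case: HK => H _ _; exact: H. Qed.
Lemma T_rel2 : T (w * uu - C eta * (uu * w)).
Proof. rewrite F2; case: HK => _ H _; exact: H. Qed.

Definition eqT x y := T (x - y).
Lemma eqT_eq x y : x = y -> eqT x y. Proof. by move=> ->; rewrite /eqT subrr; exact: T0. Qed.
Lemma eqT_sym x y : eqT x y -> eqT y x.
Proof. by move=> H; rewrite /eqT -opprB; apply: T_opp. Qed.
Lemma eqT_trans x y z : eqT x y -> eqT y z -> eqT x z.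
Proof. by move=> H1 H2; apply: T_eq (T_add H1 H2); rewrite addrA subrK. Qed.
Lemma eqT_add x y x' y' : eqT x y -> eqT x' y' -> eqT (x + x') (y + y').
Proof. by move=> H1 H2; apply: T_eq (T_add H1 H2); rewrite opprD addrACA. Qed.
Lemma eqT_mull a x y : nc_fin a -> eqT x y -> eqT (a * x) (a * y).
Proof. by move=> Ha H; apply: T_eq (T_mull Ha H); rewrite mulrBr. Qed.
Lemma eqT_mulr c x y : nc_fin c -> eqT x y -> eqT (x * c) (y * c).
Proof. by move=> Hc H; apply: T_eq (T_mulr Hc H); rewrite mulrBl. Qed.

Fixpoint q (n : nat) : K := if n is n'.+1 then 1 + eta * q n' else 0.

Lemma du_eq : dd * uu = uu * dd + w - C e.
Proof. by rewrite /w addrA addrK addrC subrK. Qed.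

Lemma Cc a (f : ncp K) : f * C a = C a * f. Proof. exact: Ccomm. Qed.

Lemma CmulA (f : ncp K) a x : f * (C a * x) = C a * (f * x).
Proof. by rewrite mulrA Cc mulrA. Qed.

Lemma L1 i : eqT (dd * uu ^+ i.+1)
   (uu ^+ i.+1 * dd + uu ^+ i * (C (q i.+1) * w - C (i.+1%:R * e))).
Proof.
elim: i => [|i IH].
  apply: eqT_eq; rewrite expr1 expr0 mul1r /= mulr0 addr0 C1 mul1r mul1r du_eq.
  by rewrite -addrA.
apply: eqT_trans (_ : eqT _ ((uu ^+ i.+1 * dd + uu ^+ i * (C (q i.+1) * w - C (i.+1%:R * e))) * uu)) _.
  rewrite exprSr mulrA; apply: eqT_mulr; fin.
apply: eqT_trans (_ : eqT _ (uu ^+ i.+1 * (dd * uu) + uu ^+ i * (C (q i.+1) * (C eta * (uu * w))) - uu ^+ i * C (i.+1%:R * e) * uu)) _.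
  rewrite mulrDl mulrA -addrA; apply: eqT_add; first exact: eqT_eq.
  rewrite mulrBr mulrBl; apply: eqT_add; last exact: eqT_eq.
  rewrite -!mulrA; apply: eqT_mull; first fin. apply: eqT_mull; first fin.
  exact: T_rel2.
apply: eqT_eq. rewrite du_eq.
move: (w) => W.
rewrite !mulrDr !mulrN !(CmulA (uu ^+ _)) (mulrA (uu ^+ i.+1) uu dd) (mulrA (uu ^+ i) uu W) -(exprSr uu i.+1) -(exprSr uu i) !(Cc _ (uu ^+ i.+1)) (Cc _ (uu ^+ i)) -(mulrA (C _) (uu ^+ i) uu) -(exprSr uu i).
apply: funext => s; rewrite !(addE, subE, oppE, CE) /= -[i.+2]addn1 natrD.
ring.
Qed.

Lemma L2 m : eqT (dd * w ^+ m) (C (eta ^+ m) * (w ^+ m * dd)).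
Proof.
elim: m => [|m IH]; first by apply: eqT_eq; rewrite !expr0 C1 !mul1r mulr1.
apply: eqT_trans (_ : eqT _ (C eta * (w * dd) * w ^+ m)) _.
  rewrite exprS mulrA; apply: eqT_mulr; first fin.
  exact: T_rel1.
apply: eqT_trans (_ : eqT _ (C eta * (w * (C (eta ^+ m) * (w ^+ m * dd))))) _.
  rewrite -!mulrA; apply: eqT_mull; first fin. apply: eqT_mull; first fin. exact: IH.
apply: eqT_eq; move: (w) => W.
rewrite (CmulA W) mulrA -C_mul -exprS; congr (_ * _); by rewrite exprS mulrA.
Qed.

Definition eqJ x y := J (x - y).
Lemma eqJ_eq x y : x = y -> eqJ x y. Proof. by move=> ->; rewrite /eqJ subrr; exact: J0. Qed.
Lemma eqJ_T x y : eqT x y -> eqJ x y. Proof. exact: T_J. Qed.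
Lemma eqJ_trans x y z : eqJ x y -> eqJ y z -> eqJ x z.
Proof. by move=> H1 H2; apply: J_eq (J_add H1 H2); rewrite addrA subrK. Qed.
Lemma eqJ_add x y x' y' : eqJ x y -> eqJ x' y' -> eqJ (x + x') (y + y').
Proof. by move=> H1 H2; apply: J_eq (J_add H1 H2); rewrite opprD addrACA. Qed.
Lemma eqJ_mull a x y : nc_fin a -> eqJ x y -> eqJ (a * x) (a * y).
Proof. by move=> Ha H; apply: J_eq (J_mul Ha H); rewrite mulrBr. Qed.
Lemma eqJ_sym x y : eqJ x y -> eqJ y x.
Proof. by move=> H; rewrite /eqJ -opprB; apply: J_opp. Qed.

Lemma KL i m : eqJ (dd * (uu ^+ i * w ^+ m))
  (C (eta ^+ m) * (uu ^+ i * w ^+ m) + C (q i) * (uu ^+ i.-1 * w ^+ m.+1)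
     - C (i%:R * e) * (uu ^+ i.-1 * w ^+ m)).
Proof.
have Hd : eqJ (uu ^+ i * (C (eta ^+ m) * (w ^+ m * dd))) (C (eta ^+ m) * (uu ^+ i * w ^+ m)).
  rewrite /eqJ -(CmulA (uu ^+ i)) -mulrBr; apply: J_mul; first fin.
  rewrite mulrA -{2}(mulr1 (C _ * w ^+ m)) -mulrBr; apply: J_mul; first fin. exact: Jd.
case: i Hd => [|i] Hd.
  rewrite expr0 !mul1r /= C0 mul0r mul0r C0 mul0r addr0 subr0.
  rewrite expr0 !mul1r in Hd.
  apply: eqJ_trans Hd; exact: eqJ_T (L2 m).
apply: eqJ_trans (_ : eqJ _ ((uu ^+ i.+1 * dd + uu ^+ i * (C (q i.+1) * w - C (i.+1%:R * e))) * w ^+ m)) _.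
  rewrite mulrA; apply: eqJ_T; apply: eqT_mulr; first fin. exact: L1.
apply: eqJ_trans (_ : eqJ _ (uu ^+ i.+1 * (C (eta ^+ m) * (w ^+ m * dd)) + uu ^+ i * (C (q i.+1) * w - C (i.+1%:R * e)) * w ^+ m)) _.
  rewrite mulrDl -mulrA; apply: eqJ_T; apply: eqT_add; last exact: eqT_eq.
  apply: eqT_mull; first fin. exact: L2.
apply: eqJ_trans (_ : eqJ _ (C (eta ^+ m) * (uu ^+ i.+1 * w ^+ m) + uu ^+ i * (C (q i.+1) * w - C (i.+1%:R * e)) * w ^+ m)) _.
  apply: eqJ_add => //; exact: eqJ_eq.
apply: eqJ_eq => /=; move: (w) => W.
rewrite mulrBr mulrBl addrA; congr (_ + _ - _).
  by rewrite (CmulA (uu ^+ i)) -!mulrA -exprS.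
by rewrite (Cc _ (uu ^+ i)) -mulrA.
Qed.

Definition X i m := uu ^+ i * w ^+ m.
Definition Elem N (c : nat -> nat -> K) :=
  \sum_(0 <= i < N) \sum_(0 <= m < N) C (c i m) * X i m.
Definition supp N (c : nat -> nat -> K) := forall i m, (N <= i + m)%N -> c i m = 0.
Definition Dc (c : nat -> nat -> K) i m :=
  eta ^+ m * c i m + (if m is m'.+1 then q i.+1 * c i.+1 m' else 0) - (i.+1%:R * e) * c i.+1 m.
Definition Sc (c : nat -> nat -> K) i m := if i is i'.+1 then c i' m else 0.

Lemma fin_X i m : nc_fin (X i m). Proof. rewrite /X; fin. Qed.
Lemma fin_Elem N c : nc_fin (Elem N c).
Proof. rewrite /Elem; apply: fin_sum => i; apply: fin_sum => m; apply: fin_mul; [exact: fin_C|exact: fin_X]. Qed.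

Lemma sum_nat0 (F : nat -> ncp K) N : (forall i, (i < N)%N -> F i = 0) -> \sum_(0 <= i < N) F i = 0.
Proof.
elim: N => [|N IH] H; first by rewrite big_geq.
rewrite big_nat_recr //= IH ?H ?addr0 // => i Hi; apply: H; lia.
Qed.

Lemma sum_delta (F : nat -> ncp K) a N : (a < N)%N -> (forall i, i != a -> F i = 0) ->
  \sum_(0 <= i < N) F i = F a.
Proof.
elim: N => [|N IH] // Ha H; rewrite big_nat_recr //=.
case: (ltngtP a N) => Han.
- rewrite IH // (H N) ?addr0 //; by rewrite neq_ltn Han orbT.
- lia.
- subst a; rewrite sum_nat0 ?add0r // => i Hi; apply: H; by rewrite neq_ltn Hi.
Qed.

Lemma D_supp N c : supp N c -> supp N (Dc c).
Proof.
move=> H i m Him; rewrite /Dc H // mulr0 add0r H ?mulr0 ?subr0; last lia.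
case: m Him => [|m] Him; first by [].
by rewrite H ?mulr0 //; lia.
Qed.

Lemma ElemS N c : supp N c -> Elem N.+1 c = Elem N c.
Proof.
move=> H; rewrite /Elem big_nat_recr //= [Y in _ + Y]sum_nat0; last first.
  by move=> m _; rewrite H ?C0 ?mul0r //; lia.
rewrite addr0; apply: eq_bigr => i _; rewrite big_nat_recr //= H ?C0 ?mul0r ?addr0 //; lia.
Qed.

Lemma Elem_lin N a b c1 c2 :
  Elem N (fun i m => a * c1 i m + b * c2 i m) = C a * Elem N c1 + C b * Elem N c2.
Proof.
rewrite /Elem !mulr_sumr -big_split; apply: eq_bigr => i _.
rewrite !mulr_sumr -big_split; apply: eq_bigr => m _.
by rewrite C_add mulrDl !C_mul !mulrA.
Qed.

Lemma Elem0 N : Elem N (fun _ _ => 0) = 0.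
Proof. rewrite /Elem sum_nat0 // => i _; rewrite sum_nat0 // => m _; by rewrite C0 mul0r. Qed.

Lemma Elem_single N c a b : (a < N)%N -> (b < N)%N ->
  (forall i m, (i != a) || (m != b) -> c i m = 0) -> Elem N c = C (c a b) * X a b.
Proof.
move=> Ha Hb H; rewrite /Elem (sum_delta Ha).
  rewrite (sum_delta Hb) // => m Hm; by rewrite H ?Hm ?orbT ?C0 ?mul0r.
move=> i Hi; rewrite sum_nat0 // => m _; by rewrite H ?Hi ?C0 ?mul0r.
Qed.

Lemma u_Elem N c : supp N c -> uu * Elem N c = Elem N.+1 (Sc c).
Proof.
move=> H; rewrite /Elem [in RHS]big_nat_recl //= [Y in Y + _]sum_nat0 ?add0r; last by move=> m _; rewrite /Sc C0 mul0r.
rewrite mulr_sumr; apply: eq_bigr => i _.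
rewrite big_nat_recr //= H ?C0 ?mul0r ?addr0; last lia.
rewrite mulr_sumr; apply: eq_bigr => m _.
rewrite CmulA /X /Sc; congr (_ * _); by rewrite mulrA -exprS.
Qed.

Lemma eqJ_sum N (F G : nat -> ncp K) : (forall i, eqJ (F i) (G i)) ->
  eqJ (\sum_(0 <= i < N) F i) (\sum_(0 <= i < N) G i).
Proof.
move=> H; elim: N => [|N IH]; first by rewrite !big_geq //; exact: eqJ_eq.
by rewrite !big_nat_recr //=; apply: eqJ_add.
Qed.

Lemma dsplit N (A B D : nat -> nat -> ncp K) :
  \sum_(0 <= i < N) \sum_(0 <= m < N) (A i m + B i m - D i m) =
  \sum_(0 <= i < N) \sum_(0 <= m < N) A i m + \sum_(0 <= i < N) \sum_(0 <= m < N) B i m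
  - \sum_(0 <= i < N) \sum_(0 <= m < N) D i m.
Proof.
rewrite -sumrN -!big_split; apply: eq_bigr => i _.
by rewrite -sumrN -!big_split.
Qed.

Lemma Elem_D N c : supp N c -> eqJ (dd * Elem N c) (Elem N (Dc c)).
Proof.
move=> H.
have -> : dd * Elem N c = \sum_(0 <= i < N) \sum_(0 <= m < N) C (c i m) * (dd * X i m).
  rewrite /Elem mulr_sumr; apply: eq_bigr => i _; rewrite mulr_sumr; apply: eq_bigr => m _.
  by rewrite CmulA.
apply: eqJ_trans.
  apply: eqJ_sum => i; apply: eqJ_sum => m; apply: eqJ_mull; first exact: fin_C.
  exact: KL.
apply: eqJ_eq.
rewrite (eq_bigr (fun i => \sum_(0 <= m < N) (C (c i m * eta ^+ m) * X i m + C (c i m * q i) * X i.-1 m.+1 - C (c i m * (i%:R * e)) * X i.-1 m))); last first.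
  by move=> i _; apply: eq_bigr => m _; rewrite !mulrDr mulrN !mulrA -!C_mul !mulrA.
apply: (etrans (dsplit N (fun i m => C (c i m * eta ^+ m) * X i m) (fun i m => C (c i m * q i) * X i.-1 m.+1) (fun i m => C (c i m * (i%:R * e)) * X i.-1 m))); rewrite /Elem.
have -> : \sum_(0 <= i < N) \sum_(0 <= m < N) C (Dc c i m) * X i m =
  \sum_(0 <= i < N) \sum_(0 <= m < N) (C (eta ^+ m * c i m) * X i m +
      C (if m is m'.+1 then q i.+1 * c i.+1 m' else 0) * X i m - C (i.+1%:R * e * c i.+1 m) * X i m).
  by apply: eq_bigr => i _; apply: eq_bigr => m _; rewrite /Dc C_sub C_add mulrBl mulrDl.
apply: esym; apply: (etrans (dsplit N (fun i m => C (eta ^+ m * c i m) * X i m) (fun i m => C (if m is m'.+1 then q i.+1 * c i.+1 m' else 0) * X i m) (fun i m => C (i.+1%:R * e * c i.+1 m) * X i m))); apply: esym; rewrite /=.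
congr (_ + _ - _).
- by apply: eq_bigr => i _; apply: eq_bigr => m _; rewrite mulrC.
- case: N H => [|n] H; first by rewrite !big_geq.
  rewrite big_nat_recl //= [Y in Y + _]sum_nat0 ?add0r; last by move=> m _; rewrite mulr0 C0 mul0r.
  rewrite [in RHS]big_nat_recr //= [Y in _ + Y]sum_nat0 ?addr0; last first.
    by move=> [|m] _; rewrite ?C0 ?mul0r // H ?mulr0 ?C0 ?mul0r //; lia.
  apply: eq_bigr => i _.
  rewrite big_nat_recr //= H ?mul0r ?C0 ?mul0r ?addr0; last lia.
  rewrite [in RHS]big_nat_recl //= C0 mul0r add0r.
  by apply: eq_bigr => m _; rewrite mulrC.
- case: N H => [|n] H; first by rewrite !big_geq.
  rewrite big_nat_recl //= [Y in Y + _]sum_nat0 ?add0r; last by move=> m _; rewrite mul0r mulr0 C0 mul0r.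
  rewrite [in RHS]big_nat_recr //= [Y in _ + Y]sum_nat0 ?addr0; last first.
    by move=> m _; rewrite H ?mulr0 ?C0 ?mul0r //; lia.
  by apply: eq_bigr => i _; apply: eq_bigr => m _; rewrite mulrC.
Qed.

Lemma Elem_add N c1 c2 : Elem N (fun i m => c1 i m + c2 i m) = Elem N c1 + Elem N c2.
Proof.
rewrite /Elem -big_split; apply: eq_bigr => i _; rewrite -big_split; apply: eq_bigr => m _.
by rewrite C_add mulrDl.
Qed.

Lemma supp_le N N' c : (N <= N')%N -> supp N c -> supp N' c.
Proof. move=> H Hs i m Him; apply: Hs; lia. Qed.

Lemma Cval a s : C a s = a * nc_mono K [::] s. Proof. by []. Qed.

Lemma decomp (f : ncp K) : f = C (f [::]) + dd * tl false f + uu * tl true f.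
Proof.
apply: funext => [[|b s]].
  by rewrite !addE !mulE !mul_nil Cval monoE /= !mul0r !addr0 mulr1.
rewrite !addE !mulE !mul_cons !tl_mono1 Cval monoE /= mulr0 !mul0r !add0r.
case: b => /=; rewrite -!mulE mul0r mul1r zeroE ?addr0 ?add0r //.
Qed.

Lemma span n (f : ncp K) : (forall s, (n <= size s)%N -> f s = 0) ->
  exists c, supp n c /\ eqJ f (Elem n c).
Proof.
elim: n f => [|n IH] f Hf.
  exists (fun _ _ => 0); split => //; apply: eqJ_eq; rewrite /Elem big_geq //.
  by apply: funext => s; rewrite Hf.
have [cd [Hd Ed]] := IH (tl false f) (fun s Hs => Hf (false :: s) Hs).
have [cu [Hu Eu]] := IH (tl true f) (fun s Hs => Hf (true :: s) Hs).
exists (fun i m => ((if (i == 0%N) && (m == 0%N) then f [::] else 0) + Dc cd i m) + Sc cu i m).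
split.
  move=> i m Him; rewrite (supp_le (leqnSn n) (D_supp Hd)) //.
  case: i Him => [|i] Him /=; last by rewrite Hu ?addr0 //; lia.
  by case: m Him => [|m] Him /=; rewrite ?addr0.
set dl := (fun i m => if (i == 0%N) && (m == 0%N) then f [::] else 0).
rewrite (Elem_add n.+1 (fun i m => dl i m + Dc cd i m) (Sc cu)) (Elem_add n.+1 dl (Dc cd)) (@Elem_single n.+1 dl 0 0) //; last first.
  by move=> i m /orP [/negbTE H | /negbTE H]; rewrite /dl H ?andbF.
rewrite /= /X !expr0 !mulr1 {1}[f]decomp -u_Elem // ElemS; last exact: D_supp.
apply: eqJ_add; last by apply: eqJ_mull; [exact: fin_mono | exact: Eu].
apply: eqJ_add; first exact: eqJ_eq.
apply: eqJ_trans (Elem_D Hd); apply: eqJ_mull; [exact: fin_mono | exact: Ed].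
Qed.

Hypothesis eta0 : eta != 0.
Hypothesis etaroot : forall n : nat, (0 < n)%N -> eta ^+ n != 1.
Hypothesis char0 : [pchar K] =i pred0.

Lemma pow_neq m B : (m < B)%N -> eta ^+ m != eta ^+ B.
Proof.
move=> H; rewrite -(subnKC (ltnW H)) exprD -{1}(mulr1 (eta ^+ m)).
apply/eqP => /(mulfI (expf_neq0 m eta0)) /esym /eqP; apply/negP; apply: etaroot; lia.
Qed.

Lemma natn0 n : (n.+1)%:R != 0 :> K.
Proof. by have /pcharf0P -> := char0. Qed.

Lemma e_neq0 : e != 0. Proof. by rewrite /e invr_eq0. Qed.

Definition Dl (c : nat -> nat -> K) lam i m := Dc c i m - lam * c i m.

Lemma step N c lam : supp N c -> J (Elem N c) -> J (Elem N (Dl c lam)).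
Proof.
move=> Hs HJc.
have -> : Dl c lam = fun i m => 1 * Dc c i m + (- lam) * c i m.
  by apply: funext => i; apply: funext => m; rewrite /Dl mul1r mulNr.
rewrite Elem_lin C1 mul1r C_opp mulNr; apply: J_sub; last by apply: J_mul; [exact: fin_C|].
have E := Elem_D Hs; rewrite /eqJ in E.
have -> : Elem N (Dc c) = dd * Elem N c - (dd * Elem N c - Elem N (Dc c)) by rewrite opprB addrC subrK.
apply: J_sub => //; apply: J_mul => //; exact: fin_mono.
Qed.

Definition above I (c : nat -> nat -> K) := forall i m, (I < i)%N -> c i m = 0.

Lemma D_supp_l N c lam : supp N c -> supp N (Dl c lam).
Proof. move=> H i m Him; by rewrite /Dl (D_supp H) // H // mulr0 subr0. Qed.

Lemma Dl_above I c lam : above I c -> above I (Dl c lam).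
Proof.
move=> H i m Hi; rewrite /Dl /Dc !H // ?mulr0 ?subr0 ?add0r; try lia.
by case: m => [|m] //; rewrite H ?mulr0 //; lia.
Qed.

Lemma Dl_row I c lam m : above I c -> Dl c lam I m = (eta ^+ m - lam) * c I m.
Proof.
move=> H; rewrite /Dl /Dc (H I.+1 m (ltnSn I)) mulr0 subr0 mulrBl.
by case: m => [|m] //=; rewrite ?addr0 // (H I.+1 m (ltnSn I)) mulr0 addr0.
Qed.

Lemma Dl_below I c B : above I.+1 c -> (forall m, (m < B)%N -> c I.+1 m = 0) ->
  Dl c (eta ^+ B) I B = - (I.+1%:R * e) * c I.+1 B.
Proof.
move=> Ha Hb; rewrite /Dl /Dc.
have -> : (if B is m'.+1 then q I.+1 * c I.+1 m' else 0) = 0.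
  by case: B Hb => [|B] Hb //; rewrite Hb ?mulr0.
by rewrite addr0 addrAC subrr add0r mulNr.
Qed.

Definition Goal := exists m, J (w ^+ m).

Definition P I := forall N c, supp N c -> above I c -> (exists i m, c i m != 0) ->
  J (Elem N c) -> Goal.

Lemma inner I (IHI : (0 < I)%N -> P I.-1) B : forall N c, supp N c -> above I c ->
  (forall m, (B <= m)%N -> c I m = 0) -> (exists m, c I m != 0) -> J (Elem N c) -> Goal.
Proof.
elim: B => [|B IHB] N c Hs Ha Hr [m0 Hm0] HJc.
  by rewrite Hr ?eqxx in Hm0.
case: (eqVneq (c I B) 0) => hB.
  apply: (IHB N c) => //; last by exists m0.
  move=> m; rewrite leq_eqVlt => /orP [/eqP <- //|]; exact: Hr.
case: (pselect (exists m, (m < B)%N /\ c I m != 0)) => [[m1 [Hm1 Hc1]] | Hno].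
  apply: (IHB N (Dl c (eta ^+ B))); first by apply: D_supp_l.
  - exact: Dl_above.
  - move=> m Hm; rewrite (Dl_row _ _ Ha).
    move: Hm; rewrite leq_eqVlt => /orP [/eqP -> | Hm]; first by rewrite subrr mul0r.
    by rewrite Hr ?mulr0.
  - exists m1; rewrite (Dl_row _ _ Ha) mulf_neq0 // subr_eq0; exact: pow_neq.
  - exact: step.
have Hlow : forall m, (m < B)%N -> c I m = 0.
  move=> m Hm; apply/eqP; apply/negPn/negP => Hc; apply: Hno; by exists m.
have HBN : (I + B < N)%N.
  rewrite ltnNge; apply/negP => Hle; move/eqP: hB; apply; exact: Hs.
clear IHB Hno; case: I IHI Ha Hr Hlow hB HBN m0 Hm0 => [|I] IHI Ha Hr Hlow hB HBN _ _.
  have Hc : Elem N c = C (c 0%N B) * X 0 B.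
    apply: Elem_single; try lia.
    move=> i m /orP [Hi | Hm]; first by apply: Ha; lia.
    case: i => [|i]; last by apply: Ha.
    by case: (ltngtP m B) Hm => // Hm _; [apply: Hlow | apply: Hr; lia].
  exists B; rewrite Hc /X expr0 mul1r in HJc.
  have := J_mul (fin_C (c 0%N B)^-1) HJc.
  by rewrite mulrA -C_mul mulVf // C1 mul1r; apply.
have IHI' : P I := IHI isT.
apply: (IHI' N (Dl c (eta ^+ B))).
- exact: D_supp_l.
- move=> i m Hi; case: (ltngtP i I.+1) Hi => // Hi _; first exact: (@Dl_above I.+1 c (eta ^+ B) Ha i m Hi).
  rewrite Hi (Dl_row _ _ Ha).
  case: (ltngtP m B) => Hm; [by rewrite Hlow ?mulr0 | by rewrite Hr ?mulr0 | by rewrite Hm subrr mul0r].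
- exists I, B; rewrite (Dl_below Ha Hlow) mulf_neq0 // oppr_eq0 mulf_neq0 //; [exact: natn0 | exact: e_neq0].
- exact: step.
Qed.

Lemma outer I : P I.
Proof.
elim: I => [|I IH] N c Hs Ha Hne HJc.
  case: (pselect (exists m, c 0%N m != 0)) => [Hr | Hno].
    apply: (@inner 0 (fun H => False_ind _ (notF H)) N N c) => // m Hm; apply: Hs; lia.
  case: Hne => i [m Hm]; case: i Hm => [|i] Hm; last by rewrite (Ha i.+1 m) ?eqxx in Hm.
  by case: Hno; exists m.
case: (pselect (exists m, c I.+1 m != 0)) => [Hr | Hno].
  apply: (@inner I.+1 (fun _ => IH) N N c) => // m Hm; apply: Hs; lia.
apply: (IH N c) => // i m Hi; case: (ltngtP i I.+1) => Hi'; [lia | exact: Ha |].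
rewrite Hi'; apply/eqP; apply/negPn/negP => H; apply: Hno; by exists m.
Qed.

End Alg.

Section Final.
Variable K : fieldType.

Lemma fin_scale c (f : ncp K) : nc_fin f -> nc_fin (nc_scale c f).
Proof. by move=> [n Hn]; exists n => s Hs; rewrite /nc_scale Hn ?mulr0. Qed.

Lemma fin_rel1 a b g : nc_fin (downup_rel1 a b g : ncp K).
Proof.
rewrite /downup_rel1; apply: (fin_sub (fin_mono _ _)).
apply: fin_add; first exact: fin_scale (fin_mono _ _).
apply: fin_add; apply: fin_scale; exact: fin_mono.
Qed.
Lemma fin_rel2 a b g : nc_fin (downup_rel2 a b g : ncp K).
Proof.
rewrite /downup_rel2; apply: (fin_sub (fin_mono _ _)).
apply: fin_add; first exact: fin_scale (fin_mono _ _).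
apply: fin_add; apply: fin_scale; exact: fin_mono.
Qed.

Lemma fin_li : is_left_ideal (@nc_fin K).
Proof. split => //; [exact: fin0 | exact: fin_add | move=> a x; exact: fin_mul]. Qed.

Lemma fin_kc a b g : contains_N_kernel a b g (@nc_fin K).
Proof.
split; [move=> x Hx; exact: fin_mul (fin_rel1 _ _ _) Hx | move=> x Hx; exact: fin_mul (fin_rel2 _ _ _) Hx |].
exact: fin_sub (fin_mono _ _) (fin_mono _ _).
Qed.

Lemma NK_li a b g : is_left_ideal (@N_kernel K a b g).
Proof.
split.
- move=> x Hx; exact: Hx _ fin_li (fin_kc a b g).
- by move=> J [_ H _ _] _.
- move=> x y Hx Hy J HJ HK; case: (HJ) => _ _ H _; apply: H; [exact: Hx|exact: Hy].
- move=> a' x Ha Hx J HJ HK; case: (HJ) => _ _ _ H; apply: H => //; exact: Hx.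
Qed.

Lemma NK_kc a b g : contains_N_kernel a b g (@N_kernel K a b g).
Proof.
split.
- move=> x Hx J HJ [H _ _]; exact: H.
- move=> x Hx J HJ [_ H _]; exact: H.
- move=> J HJ [_ _ H]; exact: H.
Qed.

Lemma nc_expE (f : ncp K) m : nc_exp f m = f ^+ m.
Proof. elim: m => [|m IH] //. by rewrite exprS -IH. Qed.

End Final.

Unset Implicit Arguments.
Set Strict Implicit.

Theorem lemma4p4 (K : fieldType) (eta : K) :
  [pchar K] =i pred0 ->
  eta != 0 ->
  (forall n : nat, (0 < n)%N -> eta ^+ n != 1) ->
  let eps := (eta - 1)^-1 in
  let w := nc_add (nc_sub (nc_mono K [:: false; true]) (nc_mono K [:: true; false]))
                  (nc_const eps) in
  forall J : ncp K -> Prop,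
    is_left_ideal J ->
    contains_N_kernel (1 + eta) (- eta) 1 J ->
    (exists x, J x /\ ~ N_kernel (1 + eta) (- eta) 1 x) ->
    exists m : nat, J (nc_exp w m).
Proof.
move=> Hchar Heta Hroot eps w0 J HJ HK [x [Jx nKx]].
have eta1 : eta - 1 != 0 by rewrite subr_eq0 -(expr1 eta); exact: Hroot.
have Ew : w0 = w eta.
  by rewrite /w0 /w -(mono_cat _ [:: false] [:: true]) -(mono_cat _ [:: true] [:: false]).
have [n Hn] := J_fin HJ Jx.
have [c [Hs E]] := span eta1 (NK_li _ _ _) (NK_kc _ _ _) Hn.
have EJ : J (x - Elem eta n c) := E J HJ HK.
have JE : J (Elem eta n c).
  have -> : Elem eta n c = x - (x - Elem eta n c) by rewrite opprB addrC subrK.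
  exact (J_sub HJ Jx EJ).
case: (pselect (exists i m, c i m != 0)) => [Hne | Hz]; last first.
  exfalso; apply: nKx.
  have Hc : c = fun _ _ => 0.
    apply: funext => i; apply: funext => m; apply/eqP; apply/negPn/negP => H.
    by apply: Hz; exists i, m.
  by move: E; rewrite /eqJ Hc (Elem0 eta1 n) subr0.
have [m Hm] := outer eta1 HJ HK Heta Hroot Hchar Hs (fun i m Hi => Hs i m (leq_trans (ltnW Hi) (leq_addr _ _))) Hne JE.
by exists m; rewrite nc_expE Ew.
Qed.
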